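(* Suppose that condition (L) holds and $F\in e-{\mathcal B}-W^{p}(\Lambda \times X : Y).$ Let ${\mathrm R}$ be the collection of all sequences ${\bf b}=({\bf b}(m))_{m\in{\mathbb N}}$ in ${\mathbb R}^{n}$ such that ${\bf t}+{\bf b}(m)\in \Lambda$ for all ${\bf t}\in \Lambda$ and $m\in {\mathbb N}$, and let ${\mathcal B}$ be any collection of compact subsets of $X$ (such that each $x\in X$ belongs to some $B\in{\mathcal B}$). Then the function $F(\cdot;\cdot)$ is Weyl-$({\mathrm R},{\mathcal B},p)$-normal.
   Context: Standing setting: $(X,\|\cdot\|)$ and $(Y,\|\cdot\|_{Y})$ are complex Banach spaces; ${\mathcal B}$ is a non-empty collection of subsets of $X$ such that each $x\in X$ lies in some $B\in{\mathcal B}$; $\Omega=[0,1]^{n}$; $p\in[1,\infty)$ is a constant exponent; $\emptyset\neq\Lambda\subseteq{\mathbb R}^{n}$ satisfies $\Lambda+l\Omega\subseteq\Lambda$ for all $l>0$; $F:\Lambda\times X\rightarrow Y$. Condition (L): for all ${\bf t}\in\Lambda$, $x\in X$ and $l>0$, the function ${\bf u}\mapsto \|F({\bf t}+{\bf u};x)\|_{Y}$ belongs to $L^{p}(l\Omega)$. For functions $F,G:\Lambda\times X\to Y$ with $F({\bf t}+\cdot;x)-G({\bf t}+\cdot;x)\in L^{p}(l\Omega:Y)$ for all ${\bf t},x,l$, and $B\in{\mathcal B}$, set $D_{S_{l\Omega},B}^{p}(F,G):=\sup_{x\in B}\sup_{{\bf t}\in\Lambda} l^{-n/p}\|F({\bf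 t}+\cdot;x)-G({\bf t}+\cdot;x)\|_{L^{p}(l\Omega:Y)}$; the Weyl $p$-distance $D_{W,B}^{p}(F,G):=\lim_{l\rightarrow\infty}D_{S_{l\Omega},B}^{p}(F,G)$ exists (it is a pseudometric satisfying the triangle inequality). A trigonometric polynomial $P:\Lambda\times X\to Y$ is a finite linear combination of functions $e^{i[\lambda_{1}t_{1}+\cdots+\lambda_{n}t_{n}]}c(x)$ with $\lambda_{i}\in{\mathbb R}$ and $c:X\to Y$ continuous. $F\in e-{\mathcal B}-W^{p}(\Lambda\times X:Y)$ means: (L) holds and for every $B\in{\mathcal B}$ and $\epsilon>0$ there exist $l_{0}>0$ and a trigonometric polynomial $P$ with $\sup_{x\in B,{\bf t}\in\Lambda} l^{-n/p}\|P({\bf t}+\cdot;x)-F({\bf t}+\cdot;x)\|_{L^{p}(l\Omega:Y)}<\epsilon$ for all $l\geq l_{0}$ (equivalently, for each $B$ there are trigonometric polynomials $P_{m}$ with $D_{W,B}^{p}(F,P_{m})\to0$). $F$ is Weyl-$({\mathrm R},{\mathcal B},p)$-normal means: for every $B\in{\mathcal B}$ and every sequence $({\bf b}_{k})\in{\mathrm R}$ there exists a subsequence $({\bf b}_{k_{m}})$ such that $(F(\cdot+{\bf b}_{k_{m}};\cdot))_{m\in{\mathbb N}}$ is a Cauchy sequence with respect to $D_{W,B}^{p}(\cdot,\cdot)$. *)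

(* Defs.v *)
From HB Require Import structures.
From mathcomp Require Import all_boot all_order all_algebra.
From mathcomp Require Import all_classical all_reals all_analysis.
From mathcomp Require Import measurable_realfun.
Set Implicit Arguments. Unset Strict Implicit. Unset Printing Implicit Defensive.
Import Order.TTheory GRing.Theory Num.Theory.
Import numFieldNormedType.Exports.
Local Open Scope classical_set_scope.
Local Open Scope ring_scope.

Section WeylDefs.
Variable R : realType.

(* A complex normed space is encoded as a real normed space V with a real-   *)
(* linear J : V -> V (multiplication by i) with J (J v) = - v, and such that *)
(* the complex scalar a + i b acts by a *: v + b *: J v with norm            *)
(* |a + i b| * ||v||.                                                        *)
Definition cscale (V : normedModType R) (J : V -> V) (a b : R) (v : V) : V :=
  a *: v + b *: J v.

Definition complex_structure (V : normedModType R) (J : V -> V) : Prop :=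
  [/\ forall (a : R) (u v : V), J (a *: u + v) = a *: J u + J v,
      forall v : V, J (J v) = - v &
      forall (a b : R) (v : V), `|cscale J a b v| = Num.sqrt (a ^+ 2 + b ^+ 2) * `|v| ].

Definition tadd n (t u : n.-tuple R) : n.-tuple R :=
  [tuple tnth t i + tnth u i | i < n].

(* l * Omega = [0,l]^n *)
Definition cube n (l : R) : set (n.-tuple R) :=
  [set u | forall i : 'I_n, 0 <= tnth u i <= l].

Definition dotn n (lam t : n.-tuple R) : R := \sum_(i < n) tnth lam i * tnth t i.

(* iterated Lebesgue integral over [0,l]^n (Tonelli), for Borel functions *)
Fixpoint cube_iint (l : R) (n : nat) : (n.-tuple R -> \bar R) -> \bar R :=
  match n return (n.-tuple R -> \bar R) -> \bar R with
  | 0 => fun f => f [tuple]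
  | m.+1 => fun f =>
      (\int[@lebesgue_measure R]_(s in [set s : R | (0 <= s <= l)%R]) cube_iint l
          (fun v : m.-tuple R => f [tuple of s :: v]))%E
  end.

(* (upper) Lebesgue integral over [0,l]^n : infimum of the integrals of Borel *)
(* majorants; it is the Lebesgue integral for Lebesgue-measurable f >= 0.    *)
Definition cube_int n (l : R) (f : n.-tuple R -> \bar R) : \bar R :=
  ereal_inf [set cube_iint l g | g in
     [set g : n.-tuple R -> \bar R | measurable_fun setT g /\
        forall u, cube l u -> (f u <= g u)%E]].

Definition cube_null n (l : R) (N : set (n.-tuple R)) : Prop :=
  cube_int l (fun u => (\1_N u)%:E) = 0%E.

Definition strongly_measurable_on (V : normedModType R) n (l : R)
    (h : n.-tuple R -> V) : Prop :=
  exists s : nat -> n.-tuple R -> V,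
    (forall k, finite_set (range (s k)) /\
       forall y : V, measurable (s k @^-1` [set y])) /\
    exists N, cube_null l N /\
      forall u, cube l u -> ~ N u -> (s k u @[k --> \oo] --> h u).

Definition Lp_norm (V : normedModType R) n (p l : R) (h : n.-tuple R -> V) : \bar R :=
  ((cube_int l (fun u => (`|h u| `^ p)%:E)) `^ p^-1)%E.

Definition in_Lp (V : normedModType R) n (p l : R) (h : n.-tuple R -> V) : Prop :=
  strongly_measurable_on l h /\ (Lp_norm p l h < +oo)%E.

Section Weyl.
Variables (X Y : normedModType R) (n : nat) (p : R) (Lambda : set (n.-tuple R)).

Definition condL (F : n.-tuple R -> X -> Y) : Prop :=
  forall t x l, Lambda t -> 0 < l ->
    in_Lp (V := R^o) p l (fun u => `|F (tadd t u) x|).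

Definition DS (B : set X) (F G : n.-tuple R -> X -> Y) (l : R) : \bar R :=
  ereal_sup [set ((l `^ (- (n%:R / p)))%:E *
                   Lp_norm p l (fun u => (F (tadd t u) x - G (tadd t u) x)%R))%E
            | x in B & t in Lambda].

Definition DW (B : set X) (F G : n.-tuple R -> X -> Y) : \bar R :=
  lim (DS B F G l @[l --> +oo]).

(* trigonometric polynomials: finite sums of terms e^{i <lam_k, t>} alpha_k c_k(x), *)
(* with alpha_k = a_k + i b_k complex and c_k : X -> Y continuous              *)
Definition trig_poly (J : Y -> Y) (P : n.-tuple R -> X -> Y) : Prop :=
  exists (N : nat) (lam : 'I_N -> n.-tuple R) (a b : 'I_N -> R) (c : 'I_N -> X -> Y),
    (forall k, continuous (c k)) /\
    forall t x, P t x = \sum_(k < N)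
        cscale J (cos (dotn (lam k) t)) (sin (dotn (lam k) t))
               (cscale J (a k) (b k) (c k x)).

Definition eBWp (J : Y -> Y) (calB : set (set X)) (F : n.-tuple R -> X -> Y) : Prop :=
  condL F /\
  forall B, calB B -> forall eps : R, 0 < eps ->
    exists l0 : R, exists P, 0 < l0 /\ trig_poly J P /\
      (forall t x l, Lambda t -> 0 < l ->
          in_Lp p l (fun u => P (tadd t u) x - F (tadd t u) x)) /\
      forall l, l0 <= l -> (DS B P F l < eps%:E)%E.

Definition weyl_normal (calR : set (nat -> n.-tuple R)) (calB : set (set X))
    (F : n.-tuple R -> X -> Y) : Prop :=
  forall B, calB B -> forall b, calR b ->
    exists phi : nat -> nat, {homo phi : i j / (i < j)%N >-> (i < j)%N} /\
      forall eps : R, 0 < eps -> exists M : nat, forall i j, (M <= i)%N -> (M <= j)%N ->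
        (DW B (fun t x => F (tadd t (b (phi i))) x)
              (fun t x => F (tadd t (b (phi j))) x) < eps%:E)%E.

End Weyl.
End WeylDefs.

(* Main.v *)
Require Import Defs.
From HB Require Import structures.
From mathcomp Require Import all_boot all_order all_algebra.
From mathcomp Require Import all_classical all_reals all_analysis.
From mathcomp Require Import measurable_realfun.
From mathcomp Require Import ring lra.
Import Order.TTheory GRing.Theory Num.Theory.
Import numFieldNormedType.Exports.
Local Open Scope classical_set_scope.
Local Open Scope ring_scope.

Section CubeInt.
Variable R : realType.
Variable l : R.
Hypothesis l0 : 0 < l.

Let D := [set s : R | (0 <= s <= l)%R].
Let mD : measurable D.
Proof.
have -> : D = `[0, l]%classic by apply/seteqP; split=> x /=; rewrite in_itv.
exact: measurable_itv.
Qed.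

Lemma cube_cons m s (v : m.-tuple R) :
  cube l [tuple of s :: v] <-> D s /\ cube l v.
Proof.
split.
  move=> h; split; first by have := h ord0; rewrite (tnth_nth 0).
  by move=> i; have := h (lift ord0 i); rewrite !(tnth_nth 0).
move=> [hs hv] i; case: (unliftP ord0 i) => [j ->|->].
  by have := hv j; rewrite !(tnth_nth 0).
by rewrite (tnth_nth 0).
Qed.

Lemma ciint_ext m (g h : m.-tuple R -> \bar R) :
  (forall u, cube l u -> g u = h u) -> cube_iint l g = cube_iint l h.
Proof.
elim: m g h => [|m IH] g h gh /=.
  by apply: gh => -[].
apply: eq_integral => s /[1!inE] Ds; apply: IH => v cv.
by apply: gh; apply/cube_cons.
Qed.

Lemma ciint_ge0 m (g : m.-tuple R -> \bar R) :
  (forall u, cube l u -> (0 <= g u)%E) -> (0 <= cube_iint l g)%E.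
Proof.
elim: m g => [|m IH] g g0 /=.
  by apply: g0 => -[].
apply: integral_ge0 => s Ds; apply: IH => v cv.
by apply: g0; apply/cube_cons.
Qed.

Lemma ciint_meas m d (T : measurableType d) (G : T -> m.-tuple R -> \bar R) :
  measurable_fun setT (fun z : T * m.-tuple R => G z.1 z.2) ->
  (forall t u, (0 <= G t u)%E) ->
  measurable_fun setT (fun t => cube_iint l (G t)).
Proof.
elim: m d T G => [|m IH] d T G mG G0 /=.
  have -> : (fun t => G t [tuple]) = (fun z : T * 0.-tuple R => G z.1 z.2) \o (fun t => (t, [tuple]))
    by [].
  apply: measurableT_comp => //.
pose H := fun (ts : T * R) (v : m.-tuple R) => G ts.1 [tuple of ts.2 :: v].
have mH : measurable_fun setT (fun z : (T * R) * m.-tuple R => H z.1 z.2).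
  rewrite /H.
  have -> : (fun z : (T * R) * m.-tuple R => G z.1.1 [tuple of z.1.2 :: z.2]) =
     (fun z : T * m.+1.-tuple R => G z.1 z.2) \o
     (fun z : (T * R) * m.-tuple R => (z.1.1, [the m.+1.-tuple R of z.1.2 :: z.2])) by [].
  apply: measurableT_comp => //.
  apply: measurable_fun_pair.
    exact: measurableT_comp measurable_fst measurable_fst.
  apply: measurable_cons; last exact: measurable_snd.
  exact: measurableT_comp measurable_snd measurable_fst.
have mPhi := IH _ _ H mH (fun _ _ => G0 _ _).
set Phi := fun ts : T * R => cube_iint l (H ts) in mPhi.
have -> : (fun t => (\int[lebesgue_measure]_(s in D) cube_iint l (fun v => G t [tuple of s :: v]))%E)
   = fubini_F lebesgue_measure (fun z : T * R => Phi z * (\1_D z.2)%:E)%E.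
  apply/funext => t; rewrite /fubini_F [LHS]integral_mkcond [RHS]integral_mkcond.
  apply: eq_integral => s _ /=; rewrite /patch /Phi /H /= in_setT.
  case: ifPn => sD; first by rewrite indicE sD mule1.
  by rewrite indicE (negbTE sD) mule0.
apply: measurable_fun_fubini_tonelli_F.
  apply: emeasurable_funM => //.
  apply/measurable_EFinP; apply: measurableT_comp; last exact: measurable_snd.
  exact: measurable_indic.
move=> z; apply: mule_ge0; last by rewrite lee_fin indicE.
by apply: ciint_ge0 => u _; exact: G0.
Qed.


Lemma ciint_meas1 m (g : m.+1.-tuple R -> \bar R) :
  measurable_fun setT g -> (forall u, (0 <= g u)%E) ->
  measurable_fun setT (fun s : R => cube_iint l (fun v : m.-tuple R => g [tuple of s :: v])).
Proof.
move=> mg g0.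
apply: (@ciint_meas m _ R (fun s v => g [tuple of s :: v])) => //.
have -> : (fun z : R * m.-tuple R => g [tuple of z.1 :: z.2]) =
   g \o (fun z : R * m.-tuple R => [the m.+1.-tuple R of z.1 :: z.2]) by [].
apply: measurableT_comp => //.
exact: measurable_cons measurable_fst measurable_snd.
Qed.

Lemma meas_sec m (g : m.+1.-tuple R -> \bar R) s :
  measurable_fun setT g ->
  measurable_fun setT (fun v : m.-tuple R => g [tuple of s :: v]).
Proof.
move=> mg.
have -> : (fun v : m.-tuple R => g [tuple of s :: v]) =
   g \o (fun v : m.-tuple R => [the m.+1.-tuple R of (fun=> s) v :: v]) by [].
apply: measurableT_comp => //.
apply: measurable_cons => //; exact: measurable_cst.
Qed.

Lemma ciint_add m (g h : m.-tuple R -> \bar R) :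
  measurable_fun setT g -> measurable_fun setT h ->
  (forall u, (0 <= g u)%E) -> (forall u, (0 <= h u)%E) ->
  cube_iint l (fun u => g u + h u)%E = (cube_iint l g + cube_iint l h)%E.
Proof.
elim: m g h => [|m IH] g h mg mh g0 h0 //=.
rewrite -ge0_integralD //; try (by move=> s _; apply: ciint_ge0 => u _);
  try (by apply: (measurable_funS measurableT) => //; exact: ciint_meas1).
apply: eq_integral => s _; apply: IH => //; exact: meas_sec.
Qed.

Lemma ciint_scale m (g : m.-tuple R -> \bar R) (c : R) :
  measurable_fun setT g -> (forall u, (0 <= g u)%E) -> 0 <= c ->
  cube_iint l (fun u => c%:E * g u)%E = (c%:E * cube_iint l g)%E.
Proof.
elim: m g => [|m IH] g mg g0 c0 //=.
rewrite -ge0_integralZl //; try (by move=> s _; apply: ciint_ge0 => u _);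
  try (by apply: (measurable_funS measurableT) => //; exact: ciint_meas1);
  try (by rewrite lee_fin).
apply: eq_integral => s _; apply: IH => //; exact: meas_sec.
Qed.

Lemma ciint_cst m (k : R) :
  cube_iint l (fun _ : m.-tuple R => k%:E) = (k * l ^+ m)%:E.
Proof.
elim: m k => [|m IH] k /=; first by rewrite expr0 mulr1.
under eq_integral => s _ do rewrite IH.
rewrite integral_cst //.
have -> : [set s : R | (0 <= s <= l)%R] = `[0, l]%classic by apply/seteqP; split=> x /=; rewrite in_itv.
have := @lebesgue_measure_itv R `[0%R, l]; rewrite /= lte_fin l0 -EFinD subr0 => ->.
rewrite -EFinM.
by rewrite exprSr mulrA.
Qed.

End CubeInt.

Section LpLemmas.
Variable R : realType.

Lemma cint_ge0 n (l : R) (f : n.-tuple R -> \bar R) :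
  (forall u, cube l u -> (0 <= f u)%E) -> (0 <= cube_int l f)%E.
Proof.
move=> f0; apply/ereal_infP => y [g [mg fg] <-].
by apply: ciint_ge0 => u cu; exact: le_trans (f0 u cu) (fg u cu).
Qed.

Lemma cint_le n (l : R) (f g : n.-tuple R -> \bar R) :
  measurable_fun setT g -> (forall u, cube l u -> (f u <= g u)%E) ->
  (cube_int l f <= cube_iint l g)%E.
Proof. by move=> mg fg; apply: ereal_inf_le; exists (cube_iint l g) => //; exists g. Qed.

Lemma key_pow (n : nat) (p l c : R) : 0 < p -> 0 < l -> 0 <= c ->
  (c `^ p * l ^+ n) `^ p^-1 = c * l `^ (n%:R / p).
Proof.
move=> p0 l0 c0.
rewrite powRM ?powR_ge0 ?exprn_ge0 ?ltW //.
rewrite -powRrM mulfV ?gt_eqF // powRr1 //.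
by rewrite -powR_mulrn ?ltW // -powRrM.
Qed.

Lemma key_pow2 (n : nat) (p l : R) : 0 < l ->
  l `^ (- (n%:R / p)) * l `^ (n%:R / p) = 1.
Proof.
by move=> l0; rewrite powRN mulVf // gt_eqF // powR_gt0.
Qed.

Lemma Lp_le (V : normedModType R) n (p l : R) (h : n.-tuple R -> V) (c : R) :
  0 < p -> 0 < l -> 0 <= c ->
  (cube_int l (fun u => (`|h u| `^ p)%:E) <= (c `^ p * l ^+ n)%:E)%E ->
  ((l `^ (- (n%:R / p)))%:E * Lp_norm p l h <= c%:E)%E.
Proof.
move=> p0 l0 c0; rewrite /Lp_norm.
have : (0 <= cube_int l (fun u => (`|h u| `^ p)%:E))%E.
  by apply: cint_ge0 => u _; rewrite lee_fin powR_ge0.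
case: (cube_int _ _) => [r||] //= r0 hr.
rewrite -EFinM lee_fin; move: r0 hr; rewrite !lee_fin => r0 hr.
have ip : 0 <= p^-1 by rewrite invr_ge0 ltW.
have nB : c `^ p * l ^+ n \is Num.nneg by rewrite nnegrE mulr_ge0 ?powR_ge0 ?exprn_ge0 ?ltW.
have nr : r \is Num.nneg by rewrite nnegrE.
have H := @ge0_ler_powR R p^-1 ip r (c `^ p * l ^+ n) nr nB hr.
rewrite key_pow // in H.
apply: (le_trans (ler_wpM2l (powR_ge0 _ _) H)).
by rewrite mulrCA key_pow2 // mulr1.
Qed.

Lemma Lp_lt (V : normedModType R) n (p l : R) (h : n.-tuple R -> V) (c : R) :
  0 < p -> 0 < l -> 0 <= c ->
  ((l `^ (- (n%:R / p)))%:E * Lp_norm p l h < c%:E)%E ->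
  (cube_int l (fun u => (`|h u| `^ p)%:E) < (c `^ p * l ^+ n)%:E)%E.
Proof.
move=> p0 l0 c0; rewrite /Lp_norm.
case: (cube_int _ _) => [r| |] /=; last 2 first.
- by rewrite invr_eq0 gt_eqF // mulry gtr0_sg ?powR_gt0 // mul1e.
- by move=> _; rewrite ltNyr.
rewrite -EFinM !lte_fin => H.
rewrite ltNge; apply/negP => hr.
have ip : 0 <= p^-1 by rewrite invr_ge0 ltW.
have nB : c `^ p * l ^+ n \is Num.nneg by rewrite nnegrE mulr_ge0 ?powR_ge0 ?exprn_ge0 ?ltW.
have r0 : 0 <= r by apply: le_trans hr; rewrite mulr_ge0 ?powR_ge0 ?exprn_ge0 ?ltW.
have nr : r \is Num.nneg by rewrite nnegrE.
have := @ge0_ler_powR R p^-1 ip (c `^ p * l ^+ n) r nB nr hr.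
rewrite key_pow // => H2.
move: H; rewrite ltNge => /negP; apply.
apply: le_trans (ler_wpM2l (powR_ge0 _ _) H2).
by rewrite mulrCA key_pow2 // mulr1.
Qed.

End LpLemmas.

Section DSLemmas.
Variable R : realType.
Variables (X Y : normedModType R) (n : nat) (p : R) (Lambda : set (n.-tuple R)).

Lemma DS_le (B : set X) (F G : n.-tuple R -> X -> Y) (l c : R) :
  0 < p -> 0 < l -> 0 <= c ->
  (forall x t, B x -> Lambda t ->
    (cube_int l (fun u => (`|F (tadd t u) x - G (tadd t u) x| `^ p)%:E)
      <= (c `^ p * l ^+ n)%:E)%E) ->
  (DS p Lambda B F G l <= c%:E)%E.
Proof.
move=> p0 l0 c0 H; apply/ereal_supP => y [x Bx [t Lt <-]].
exact: Lp_le (H x t Bx Lt).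
Qed.

Lemma DS_lt (B : set X) (F G : n.-tuple R -> X -> Y) (l c : R) x t :
  0 < p -> 0 < l -> 0 <= c -> B x -> Lambda t ->
  (DS p Lambda B F G l < c%:E)%E ->
  (cube_int l (fun u => (`|F (tadd t u) x - G (tadd t u) x| `^ p)%:E)
      < (c `^ p * l ^+ n)%:E)%E.
Proof.
move=> p0 l0 c0 Bx Lt H; apply: Lp_lt => //.
apply: le_lt_trans H; apply: ereal_sup_ubound.
by exists x => //; exists t.
Qed.

Lemma DW_lt (B : set X) (F G : n.-tuple R -> X -> Y) (L a eps : R) :
  (forall l, L <= l -> (DS p Lambda B F G l <= a%:E)%E) -> a < eps -> 0 < eps ->
  (DW p Lambda B F G < eps%:E)%E.
Proof.
move=> H ae e0; rewrite /DW.
case: (pselect (cvg (DS p Lambda B F G l @[l --> +oo]))) => hc; last first.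
  by rewrite dvgP // lte_fin.
apply: le_lt_trans (_ : a%:E < eps%:E)%E; last by rewrite lte_fin.
apply: lime_le => //.
exists L; split; first exact: num_real.
by move=> l /ltW; exact: H.
Qed.

End DSLemmas.

Section Trig.
Variable R : realType.

Lemma tnth_tadd n (t u : n.-tuple R) i : tnth (tadd t u) i = tnth t i + tnth u i.
Proof. by rewrite /tadd tnth_mktuple. Qed.

Lemma taddAC n (t u b : n.-tuple R) : tadd (tadd t u) b = tadd (tadd t b) u.
Proof. by apply: eq_from_tnth => i; rewrite !tnth_tadd addrAC. Qed.

Lemma dotn_tadd n (lam t b : n.-tuple R) : dotn lam (tadd t b) = dotn lam t + dotn lam b.
Proof.
by rewrite /dotn -big_split /=; apply: eq_bigr => i _; rewrite tnth_tadd mulrDr.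
Qed.

Variable Y : normedModType R.
Variable J : Y -> Y.
Hypothesis cs : complex_structure J.

Lemma normJ v : `|J v| = `|v|.
Proof.
case: cs => _ _ /(_ 0 1 v); rewrite /Defs.cscale. rewrite scale0r add0r scale1r.
by rewrite expr0n /= add0r expr1n sqrtr1 mul1r.
Qed.

Lemma norm_cscale_le a b v : `|Defs.cscale J a b v| <= (`|a| + `|b|) * `|v|.
Proof.
rewrite /Defs.cscale mulrDl; apply: le_trans (ler_normD _ _) _.
by rewrite !normrZ normJ.
Qed.

Lemma cscaleB a b a' b' v : Defs.cscale J a b v - Defs.cscale J a' b' v = Defs.cscale J (a - a') (b - b') v.
Proof.
rewrite /Defs.cscale !scalerBl opprD !addrA; congr (_ + _).
by rewrite addrAC.
Qed.

Lemma trig_diff n N (lam : 'I_N -> n.-tuple R) (a b : 'I_N -> R) (c : 'I_N -> Y)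
   (w b1 b2 : n.-tuple R) (M : 'I_N -> R) (eta : R) :
  (forall q, `|c q| <= M q) ->
  (forall q, `|cos (dotn (lam q) b1) - cos (dotn (lam q) b2)| <= eta /\
             `|sin (dotn (lam q) b1) - sin (dotn (lam q) b2)| <= eta) ->
  `|\sum_(q < N) Defs.cscale J (cos (dotn (lam q) (tadd w b1))) (sin (dotn (lam q) (tadd w b1)))
        (Defs.cscale J (a q) (b q) (c q))
    - \sum_(q < N) Defs.cscale J (cos (dotn (lam q) (tadd w b2))) (sin (dotn (lam q) (tadd w b2)))
        (Defs.cscale J (a q) (b q) (c q))|
  <= 4 * eta * \sum_(q < N) (`|a q| + `|b q|) * M q.
Proof.
move=> hM he.
rewrite -sumrB mulr_sumr; apply: le_trans (ler_norm_sum _ _ _) _.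
apply: ler_sum => q _; rewrite cscaleB.
apply: le_trans (norm_cscale_le _ _ _) _.
have [h1 h2] := he q.
rewrite !dotn_tadd !cosD !sinD.
set A := dotn (lam q) w; set c1 := cos (dotn (lam q) b1); set c2 := cos (dotn (lam q) b2).
set s1 := sin (dotn (lam q) b1); set s2 := sin (dotn (lam q) b2).
have e0 : 0 <= eta by apply: le_trans h1.
have HC : `|cos A * c1 - sin A * s1 - (cos A * c2 - sin A * s2)| <= 2 * eta.
  have -> : cos A * c1 - sin A * s1 - (cos A * c2 - sin A * s2) = cos A * (c1 - c2) - sin A * (s1 - s2) by ring.
  apply: le_trans (ler_normB _ _) _; rewrite !normrM mulr2n mulrDl !mul1r.
  apply: lerD; rewrite -[X in _ <= X]mul1r; apply: ler_pM => //; [exact: cos_max|exact: sin_max].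
have HS : `|sin A * c1 + cos A * s1 - (sin A * c2 + cos A * s2)| <= 2 * eta.
  have -> : sin A * c1 + cos A * s1 - (sin A * c2 + cos A * s2) = sin A * (c1 - c2) + cos A * (s1 - s2) by ring.
  apply: le_trans (ler_normD _ _) _; rewrite !normrM mulr2n mulrDl !mul1r.
  apply: lerD; rewrite -[X in _ <= X]mul1r; apply: ler_pM => //; [exact: sin_max|exact: cos_max].
have Hw : `|Defs.cscale J (a q) (b q) (c q)| <= (`|a q| + `|b q|) * M q.
  apply: le_trans (norm_cscale_le _ _ _) _.
  by apply: ler_wpM2l => //; rewrite addr_ge0.
have -> : 4 * eta = 2 * eta + 2 * eta by ring.
apply: ler_pM => //.
exact: lerD.
Qed.

End Trig.

Definition infnat (S : nat -> Prop) := forall N, exists m, (N <= m)%N /\ S m.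

Section Pigeon.
Variable R : realType.

Lemma pigeon1 (K : nat) (S : nat -> Prop) (f : nat -> R) (c eta : R) :
  0 < eta -> infnat S -> (forall m, S m -> c <= f m <= c + K%:R * eta) ->
  exists S', [/\ infnat S', (forall m, S' m -> S m) &
     forall m m', S' m -> S' m' -> `|f m - f m'| <= eta].
Proof.
elim: K S c => [|K IH] S c e0 iS hS.
  exists S; split => // m m' /hS + /hS; rewrite mul0r addr0 => h1 h2.
  have -> : f m = c by apply/eqP; rewrite eq_le; case/andP: h1 => -> ->.
  have -> : f m' = c by apply/eqP; rewrite eq_le; case/andP: h2 => -> ->.
  by rewrite subrr normr0 ltW.
case: (pselect (infnat (fun m => S m /\ f m <= c + eta))) => h.
  exists (fun m => S m /\ f m <= c + eta); split => //; first by move=> m [].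
  move=> m m' [/hS/andP[h1 _] h2] [/hS/andP[h3 _] h4].
  rewrite ler_norml; apply/andP; split; lra.
have iS2 : infnat (fun m => S m /\ c + eta < f m).
  move=> N.
  have [N1 HN1] : exists N1, forall m, (N1 <= m)%N -> ~ (S m /\ f m <= c + eta).
    move/existsNP: h => [N1 /forallNP HN]; exists N1 => m Nm Sm.
    by apply: (HN m); split.
  have [m [hm Sm]] := iS (maxn N N1).
  exists m; split; first by apply: leq_trans hm; exact: leq_maxl.
  split => //; rewrite ltNge; apply/negP => hle; apply: (HN1 m) => //.
  by apply: leq_trans hm; exact: leq_maxr.
have [|S' [i1 i2 i3]] := IH _ (c + eta) e0 iS2.
  move=> m [Sm hm].
  case/andP: (hS m Sm) => _ h2; apply/andP; split; first exact: ltW.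
  move: h2; rewrite -natr1 mulrDl mul1r; lra.
by exists S'; split => // m /i2 [].
Qed.

Lemma pigeonL (I : eqType) (s : seq I) (fs : I -> nat -> R) (S : nat -> Prop) (eta : R) :
  0 < eta -> infnat S -> (forall q m, `|fs q m| <= 1) ->
  exists S', [/\ infnat S', (forall m, S' m -> S m) &
    forall q m m', q \in s -> S' m -> S' m' -> `|fs q m - fs q m'| <= eta].
Proof.
move=> e0 iS hb; elim: s => [|q s [S1 [i1 i2 i3]]].
  by exists S; split => // q m m'; rewrite in_nil.
pose K := (Num.trunc (2 / eta)).+1.
have hK : 2 < K%:R * eta.
  have := truncnS_gt (2 / eta); rewrite -/K => h.
  by rewrite -ltr_pdivrMr.
have [|S2 [j1 j2 j3]] := @pigeon1 K S1 (fs q) (-1) eta e0 i1.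
  move=> m _; have := hb q m; rewrite ler_norml => /andP[h1 h2].
  apply/andP; split => //; lra.
exists S2; split => //; first by move=> m /j2 /i2.
move=> q' m m'; rewrite in_cons => /orP[/eqP ->|qs] h1 h2; first exact: j3.
by apply: i3 => //; apply: j2.
Qed.

End Pigeon.

Section Combine.
Variable R : realType.

Lemma pow3 (p x y z : R) : 0 < p -> 0 <= x -> 0 <= y -> 0 <= z ->
  (x + y + z) `^ p <= 3 `^ p * (x `^ p + y `^ p + z `^ p).
Proof.
move=> p0 x0 y0 z0.
pose M := Num.max x (Num.max y z).
have hM : x + y + z <= 3 * M.
  have : x <= M by rewrite le_max lexx.
  have : y <= M by rewrite !le_max lexx orbT.
  have : z <= M by rewrite !le_max lexx !orbT.
  lra.
have M0 : 0 <= M by rewrite le_max x0.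
have nS : x + y + z \is Num.nneg by rewrite nnegrE !addr_ge0.
have n3 : 3 * M \is Num.nneg by rewrite nnegrE mulr_ge0.
apply: le_trans (ge0_ler_powR (ltW p0) nS n3 hM) _.
rewrite powRM //; apply: ler_wpM2l; first exact: powR_ge0.
have hx := powR_ge0 x p; have hy := powR_ge0 y p; have hz := powR_ge0 z p.
have : M = x \/ M = y \/ M = z.
  rewrite /M; case: (leP y z) => _; case: (leP x _) => _; tauto.
by case=> [->|[->|->]]; lra.
Qed.


Lemma combine (Y : normedModType R) n (p l d : R) (A B C D : n.-tuple R -> Y) :
  1 <= p -> 0 < l -> 0 <= d ->
  (cube_int l (fun u => (`|B u - A u| `^ p)%:E) < (d `^ p * l ^+ n)%:E)%E ->
  (cube_int l (fun u => (`|C u - D u| `^ p)%:E) < (d `^ p * l ^+ n)%:E)%E ->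
  (forall u, `|B u - C u| <= d) ->
  (cube_int l (fun u => (`|A u - D u| `^ p)%:E) <= ((9 * d) `^ p * l ^+ n)%:E)%E.
Proof.
move=> p1 l0 d0 H1 H2 H3.
have p0 : 0 < p by apply: lt_le_trans p1.
case/ereal_inf_lt: H1 => _ [g1 [mg1 hg1] <-] lt1.
case/ereal_inf_lt: H2 => _ [g2 [mg2 hg2] <-] lt2.
pose G := fun u => ((3 `^ p)%:E * (maxe (g1 u) 0 + maxe (g2 u) 0 + (d `^ p)%:E))%E.
have mG1 : measurable_fun setT (fun u => maxe (g1 u) 0%E).
  by apply: measurable_maxe => //; exact: measurable_cst.
have mG2 : measurable_fun setT (fun u => maxe (g2 u) 0%E).
  by apply: measurable_maxe => //; exact: measurable_cst.
have mG12 : measurable_fun setT (fun u => maxe (g1 u) 0%E + maxe (g2 u) 0%E)%E.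
  exact: emeasurable_funD.
have mG : measurable_fun setT G.
  apply: measurable_funeM; apply: emeasurable_funD => //; exact: measurable_cst.
have ge1 u : (0 <= maxe (g1 u) 0)%E by rewrite le_max lexx orbT.
have ge2 u : (0 <= maxe (g2 u) 0)%E by rewrite le_max lexx orbT.
apply: le_trans (@cint_le R n l _ G mG _) _.
  move=> u cu; rewrite /G.
  have hA := hg1 u cu; have hD := hg2 u cu.
  have : `|A u - D u| <= `|B u - A u| + `|B u - C u| + `|C u - D u|.
    have -> : A u - D u = (A u - B u) + (B u - C u) + (C u - D u) by rewrite !addrA !subrK.
    apply: le_trans (ler_normD _ _) _; rewrite lerD2r; apply: le_trans (ler_normD _ _) _.
    by rewrite distrC.
  move=> hAD.
  have nAD : `|A u - D u| \is Num.nneg by rewrite nnegrE.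
  have nS : `|B u - A u| + `|B u - C u| + `|C u - D u| \is Num.nneg by rewrite nnegrE !addr_ge0.
  apply: (@le_trans _ _ ((3 `^ p * (`|B u - A u| `^ p + `|B u - C u| `^ p + `|C u - D u| `^ p))%:E)).
    rewrite lee_fin; apply: le_trans (ge0_ler_powR (ltW p0) nAD nS hAD) _.
    exact: pow3.
  rewrite EFinM; apply: lee_pmul => //.
  rewrite -addrA (addrC (`|B u - C u| `^ p)) addrA !EFinD; apply: leeD; first apply: leeD.
  - by apply: le_trans hA _; rewrite le_max lexx.
  - by apply: le_trans hD _; rewrite le_max lexx.
  - rewrite lee_fin; apply: ge0_ler_powR; rewrite ?nnegrE //; exact: ltW.
have cl u : (0 <= maxe (g1 u) 0 + maxe (g2 u) 0)%E by rewrite adde_ge0.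
have cd u : (0 <= (d `^ p)%:E)%E by rewrite lee_fin powR_ge0.
rewrite /G ciint_scale //; try (by move=> u; rewrite adde_ge0);
  try (by apply: emeasurable_funD => //; exact: measurable_cst);
  try (by rewrite powR_ge0).
rewrite ciint_add //; try exact: measurable_cst.
rewrite ciint_add // ciint_cst //.
rewrite (@ciint_ext R l n (fun u => maxe (g1 u) 0%E) g1); last first.
  move=> u cu /=; apply/max_idPl; apply: le_trans _ (hg1 u cu); rewrite lee_fin powR_ge0 //.
rewrite (@ciint_ext R l n (fun u => maxe (g2 u) 0%E) g2); last first.
  move=> u cu /=; apply/max_idPl; have := hg2 u cu; apply: le_trans; by rewrite lee_fin powR_ge0.
have c1 : (0 <= cube_iint l g1)%E by apply: ciint_ge0 => u cu; have := hg1 u cu; apply: le_trans; rewrite lee_fin powR_ge0.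
have c2 : (0 <= cube_iint l g2)%E by apply: ciint_ge0 => u cu; have := hg2 u cu; apply: le_trans; rewrite lee_fin powR_ge0.
move: lt1 lt2 c1 c2.
case: (cube_iint l g1) => // r1; case: (cube_iint l g2) => // r2.
rewrite !lte_fin !lee_fin => lt1 lt2 c1 c2.
have h3 : 3 <= 3 `^ p :> R.
  by rewrite -{1}(powRr1 (_ : 0 <= 3 :> R)) // ler_powR // ler1n.
have -> : (9 * d) `^ p = 3 `^ p * 3 `^ p * d `^ p.
  by rewrite -powRM // -powRM ?mulr_ge0 //; congr (_ `^ _); ring.
have hdp := powR_ge0 d p; have hln : 0 <= l ^+ n by rewrite exprn_ge0 // ltW.
have h3p : 0 <= 3 `^ p :> R by exact: powR_ge0.
rewrite -!mulrA; apply: ler_wpM2l => //.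
apply: (@le_trans _ _ (3 * (d `^ p * l ^+ n))); first lra.
  by apply: ler_wpM2r => //; rewrite mulr_ge0.
- by move=> u; rewrite lee_fin powR_ge0.
- by move=> u; apply: adde_ge0; [exact: cl|exact: cd].

Qed.

End Combine.

Section Extract.
Variable R : realType.

Lemma cont_bound (X Y : normedModType R) (B : set X) (c : X -> Y) :
  compact B -> continuous c -> exists M, forall x, B x -> `|c x| <= M.
Proof.
move=> cB cc.
have := compact_bounded (continuous_compact (continuous_subspaceT cc) cB).
case=> M [_ HM]; exists (M + 1) => x Bx.
by apply: (HM (M + 1)); [rewrite ltrDl | exists x].
Qed.

Lemma extract (X Y : normedModType R) (J : Y -> Y) n (B : set X)
    (P : n.-tuple R -> X -> Y) (b : nat -> n.-tuple R) (d : R) (S : nat -> Prop) :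
  complex_structure J -> compact B -> trig_poly J P -> 0 < d -> infnat S ->
  exists S', [/\ infnat S', (forall m, S' m -> S m) &
    forall m m' x w, S' m -> S' m' -> B x ->
      `|P (tadd w (b m)) x - P (tadd w (b m')) x| <= d].
Proof.
move=> cs cB [N [lam [a [bb [c [cc rep]]]]]] d0 iS.
have hM : forall q : 'I_N, exists M, forall x, B x -> `|c q x| <= M.
  by move=> q; apply: cont_bound.
have [Mf hMf] := choice hM.
pose Cst := \sum_(q < N) (`|a q| + `|bb q|) * `|Mf q|.
have C0 : 0 <= Cst by apply: sumr_ge0 => q _; rewrite mulr_ge0 ?addr_ge0.
pose eta := d / (4 * Cst + 1).
have e0 : 0 < eta by rewrite divr_gt0 // ltr_wpDl // mulr_ge0.
have [S1 [i1 i2 i3]] := @pigeonL R _ (enum 'I_N)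
   (fun q m => cos (dotn (lam q) (b m))) S eta e0 iS (fun q m => cos_max _).
have [S2 [j1 j2 j3]] := @pigeonL R _ (enum 'I_N)
   (fun q m => sin (dotn (lam q) (b m))) S1 eta e0 i1 (fun q m => sin_max _).
exists S2; split => //; first by move=> m /j2 /i2.
move=> m m' x w h1 h2 Bx; rewrite !rep.
apply: le_trans (@trig_diff R Y J cs n N lam a bb (fun q => c q x) w (b m) (b m')
   (fun q => `|Mf q|) eta _ _) _.
- by move=> q; apply: le_trans (hMf q x Bx) (ler_norm _).
- move=> q; split; first by apply: i3; rewrite ?mem_enum //; apply: j2.
  by apply: j3; rewrite ?mem_enum.
rewrite -/Cst /eta.
have -> : 4 * (d / (4 * Cst + 1)) * Cst = d * (4 * Cst / (4 * Cst + 1)).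
  by ring.
rewrite -[X in _ <= X]mulr1; apply: ler_wpM2l; first exact: ltW.
by rewrite ler_pdivrMr ?mul1r ?lerDl // ltr_wpDl // mulr_ge0.
Qed.

End Extract.

Theorem theorem3p8 (R : realType)
    (X : completeNormedModType R) (JX : X -> X)
    (Y : completeNormedModType R) (JY : Y -> Y)
    (n : nat) (p : R) (Lambda : set (n.-tuple R))
    (calB : set (set X)) (F : n.-tuple R -> X -> Y) :
  complex_structure JX -> complex_structure JY ->
  1 <= p ->
  Lambda !=set0 ->
  (forall l : R, 0 < l -> forall t u, Lambda t -> cube l u -> Lambda (tadd t u)) ->
  calB !=set0 ->
  (forall x : X, exists B, calB B /\ B x) ->
  (forall B, calB B -> compact B) ->
  condL p Lambda F ->
  eBWp p Lambda JY calB F ->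
  weyl_normal p Lambda
    [set b : nat -> n.-tuple R | forall t m, Lambda t -> Lambda (tadd t (b m))]
    calB F.
Proof.
move=> csX csY p1 Lne Lcl Bne Bcov Bcomp cL [_ eB] B hB b hb.
have p0 : 0 < p by apply: lt_le_trans p1.
pose dl (k : nat) : R := (k.+1%:R)^-1.
have dl0 k : 0 < dl k by rewrite invr_gt0.
have hLP : forall k : nat, exists lP : R * (n.-tuple R -> X -> Y),
    [/\ 0 < lP.1, trig_poly JY lP.2 &
        forall l, lP.1 <= l -> (DS p Lambda B lP.2 F l < (dl k)%:E)%E].
  move=> k; have [l0 [P [l00 [tP [_ HP]]]]] := eB B hB (dl k) (dl0 k).
  by exists (l0, P).
have [LP hLPk] := choice hLP.
pose good k (S : nat -> Prop) := forall m m' x w, S m -> S m' -> B x ->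
      `|(LP k).2 (tadd w (b m)) x - (LP k).2 (tadd w (b m')) x| <= dl k.
have hext : forall kS : nat * (nat -> Prop), exists S' : nat -> Prop,
    infnat kS.2 -> [/\ infnat S', (forall m, S' m -> kS.2 m) & good kS.1 S'].
  move=> [k S] /=.
  case: (pselect (infnat S)) => iS; last by exists S.
  have [_ tP _] := hLPk k.
  have [S' [h1 h2 h3]] := @extract R X Y JY n B (LP k).2 b (dl k) S csY (Bcomp B hB) tP (dl0 k) iS.
  by exists S'.
have [ext hextP] := choice hext.
pose Sq := fix Sq (k : nat) : nat -> Prop :=
  match k with 0 => ext (0%N, fun _ => True) | k'.+1 => ext (k'.+1, Sq k') end.
have hSq : forall k, infnat (Sq k) /\ good k (Sq k) /\ (forall m, Sq k.+1 m -> Sq k m).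
  elim => [|k [IH1 [IH2 IH3]]].
    have i0 : infnat (fun _ : nat => True) by move=> N; exists N.
    have [a1 a2 a3] := hextP (0%N, fun _ => True) i0.
    split => //; split => //.
    by have [] := hextP (1%N, Sq 0%N) a1.
  have [a1 a2 a3] := hextP (k.+1, Sq k) IH1.
  split => //; split => //.
  by have [] := hextP (k.+2, Sq k.+1) a1.
have hpick : forall kN : nat * nat, exists m, (kN.2 < m)%N /\ Sq kN.1 m.
  move=> [k N]; have [+ _] := hSq k => /(_ N.+1) [m [hm Sm]].
  by exists m.
have [pk hpk] := choice hpick.
pose phi := fix phi (k : nat) : nat :=
  match k with 0 => pk (0%N, 0%N) | k'.+1 => pk (k'.+1, phi k') end.
have phiS : forall k, Sq k (phi k).
  case=> [|k] /=; [exact: (proj2 (hpk (0%N, 0%N))) | exact: (proj2 (hpk (k.+1, phi k)))].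
have phiI : forall k, (phi k < phi k.+1)%N.
  by move=> k; have [] := hpk (k.+1, phi k).
have nest : forall M i, (M <= i)%N -> forall m, Sq i m -> Sq M m.
  move=> M i /subnK <-; elim: (i - M)%N => [|k IH] m //=.
  by move=> h; apply: IH; exact: (proj2 (proj2 (hSq (k + M)%N)) m h).
exists phi; split.
  by apply: homo_ltn => //; exact: ltn_trans.
move=> eps e0.
pose M := Num.trunc (9 / eps).
have hM : 9 * dl M < eps.
  have := truncnS_gt (9 / eps); rewrite -/M => h.
  rewrite /dl mulrC ltr_pdivrMl ?ltr0n //.
  by rewrite -ltr_pdivrMr // mulrC.
exists M => i j hi hj.
have [L0 tP HP] := hLPk M.
have dM0 := dl0 M.
apply: (@DW_lt R X Y n p Lambda B _ _ (LP M).1 (9 * dl M)) => //.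
move=> l hl.
have l0 : 0 < l by apply: lt_le_trans hl.
apply: DS_le => //; first by rewrite mulr_ge0 // ltW.
move=> x t Bx Lt.
pose ti := tadd t (b (phi i)); pose tj := tadd t (b (phi j)).
have Lti : Lambda ti by exact: hb.
have Ltj : Lambda tj by exact: hb.
rewrite (_ : (fun u => _) = fun u => (`|F (tadd ti u) x - F (tadd tj u) x| `^ p)%:E); last first.
  by apply/funext => u /=; rewrite (@taddAC R n t u (b (phi i))) (@taddAC R n t u (b (phi j))).
apply: (@combine R Y n p l (dl M) (fun u => F (tadd ti u) x) (fun u => (LP M).2 (tadd ti u) x)
   (fun u => (LP M).2 (tadd tj u) x) (fun u => F (tadd tj u) x)) => //.
- exact: ltW.
- exact: (@DS_lt R X Y n p Lambda B (LP M).2 F l (dl M) x ti p0 l0 (ltW dM0) Bx Lti (HP l hl)).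
- have := (@DS_lt R X Y n p Lambda B (LP M).2 F l (dl M) x tj p0 l0 (ltW dM0) Bx Ltj (HP l hl)).
  apply: le_lt_trans; rewrite le_eqVlt; apply/orP; left; apply/eqP.
  by congr (cube_int _ _); apply/funext => u; rewrite distrC.
- move=> u; rewrite /ti /tj -(@taddAC R n t u (b (phi i))) -(@taddAC R n t u (b (phi j))).
  have [_ [gM _]] := hSq M.
  by apply: gM => //; [exact: (nest M i hi _ (phiS i)) | exact: (nest M j hj _ (phiS j))].
Qed.
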